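(* Let $\ell\ge1$ and $d\ge2$. Assign to every ordered pair of distinct hosts $(\mathbf{h}^s,\mathbf{h}^d)$ of $\mathcal{B}(\ell,d)$ its descending dipath, and give it the wavelength (color) $w_1\cdots w_\ell\in\mathbb{Z}_d^\ell$ defined by $w_i=(h^d_i-h^s_i)\bmod d$. Then any two dipaths sharing an arc receive different wavelengths, and at most $d^\ell-1$ wavelengths are used. Consequently, $$d^\ell-d^{\ell-1}\le\omega(\mathcal{B}(\ell,d))\le d^\ell-1.$$
   Context: The BCube $\mathcal{B}(\ell,d)$ ($\ell,d$ positive integers) is the symmetric digraph defined as follows, with $\mathbb{Z}_d=\{0,1,\dots,d-1\}$. - Hosts: all vectors $\mathbf{h}=h_1\cdots h_\ell\in\mathbb{Z}_d^{\ell}$. - Switches: for each layer $k\in\{1,\dots,\ell\}$, one switch $\mathbf{s}^k$ for each vector $s^k_1\cdots s^k_{\ell-1}\in\mathbb{Z}_d^{\ell-1}$. - Links: host $\mathbf{h}$ and layer-$k$ switch $\mathbf{s}^k$ are joined if and only if $s^k_1\cdots s^k_{\ell-1}=h_1\cdots h_{k-1}h_{k+1}\cdots h_\ell$. Each such link gives an uplink arc (host $\to$ switch) and a downlink arc (switch $\to$ host) at layer $k$. Descending dipath: let $\mathbf{h}^s\neq\mathbf{h}^d$ be hosts, and let $i_1>\dots>i_m$ be the coordinates in which they differ. Define $\mathbf{h}^0=\mathbf{h}^s$, and let $\mathbf{h}^j$ be $\mathbf{h}^{j-1}$ with its $i_j$-th coordinate replaced by $h^d_{i_j}$. The descending dipath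 goes, for each $j=1,\dots,m$, from $\mathbf{h}^{j-1}$ through the unique layer-$i_j$ switch adjacent to both $\mathbf{h}^{j-1}$ and $\mathbf{h}^j$, to $\mathbf{h}^j$. A host-to-host routing $R$ assigns to every ordered pair of distinct hosts a directed path between them. $\omega(\mathcal{B}(\ell,d),R)$ is the minimum number of colors needed to color the paths of $R$ so that any two paths sharing an arc get different colors. The optical index is $\omega(\mathcal{B}(\ell,d))=\min_R\omega(\mathcal{B}(\ell,d),R)$, the minimum taken over all host-to-host routings $R$. *)

(* Defs.v *)
From Stdlib Require Import ClassicalEpsilon.
From mathcomp Require Import all_boot.
Set Implicit Arguments. Unset Strict Implicit. Unset Printing Implicit Defensive.

(* Coordinates 1..l are represented by 'I_l (0-based). *)

Definition host (l d : nat) := {ffun 'I_l -> 'I_d}.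

(* Switches: a layer k together with a vector in Z_d^(l-1). *)
Definition switch (l d : nat) := ('I_l * {ffun 'I_l.-1 -> 'I_d})%type.

Definition vertex (l d : nat) := (host l d + switch l d)%type.

(* Host h is linked to layer-k switch s iff s = h_1..h_{k-1}h_{k+1}..h_l,
   i.e. s_j = h_(lift k j) for all j. *)
Definition linked (l d : nat) (h : host l d) (s : switch l d) : bool :=
  [forall j : 'I_l.-1, s.2 j == h (lift s.1 j)].

Definition arc (l d : nat) (u v : vertex l d) : bool :=
  match u, v with
  | inl h, inr s => linked h s
  | inr s, inl h => linked h s
  | _, _ => false
  end.

(* A path is stored as the tail p (vertices after the source). *)
Definition is_dipath (l d : nat) (s t : host l d) (p : seq (vertex l d)) : Prop :=
  [/\ path (@arc l d) (inl s) p, last (inl s) p = inl t & uniq (inl s :: p)].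

Definition arcs_of (T : Type) (x : T) (p : seq T) : seq (T * T) := zip (x :: p) p.

Definition routing (l d : nat) := host l d -> host l d -> seq (vertex l d).

Definition is_routing (l d : nat) (R : routing l d) : Prop :=
  forall s t : host l d, s != t -> is_dipath s t (R s t).

Definition share_arc (l d : nat) (R : routing l d) (s1 t1 s2 t2 : host l d) : bool :=
  has (fun a => a \in arcs_of (inl s2) (R s2 t2)) (arcs_of (inl s1) (R s1 t1)).

Definition proper_coloring (l d : nat) (T : eqType) (R : routing l d)
    (c : host l d -> host l d -> T) : Prop :=
  forall s1 t1 s2 t2 : host l d, s1 != t1 -> s2 != t2 -> (s1, t1) != (s2, t2) ->
    share_arc R s1 t1 s2 t2 -> c s1 t1 != c s2 t2.

Definition host_pairs (l d : nat) : seq (host l d * host l d) :=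
  [seq p <- [seq (s, t) | s <- enum (host l d), t <- enum (host l d)] | p.1 != p.2].

Definition ncolors (l d : nat) (T : eqType) (c : host l d -> host l d -> T) : nat :=
  size (undup [seq c p.1 p.2 | p <- host_pairs l d]).

(* Minimum of a set of naturals (classical; 0 if the set is empty). *)
Definition minP (P : nat -> Prop) : nat :=
  epsilon (inhabits 0) (fun n => P n /\ forall m, P m -> n <= m).

Definition omegaR (l d : nat) (R : routing l d) : nat :=
  minP (fun k => exists c : host l d -> host l d -> nat,
                   proper_coloring R c /\ ncolors c = k).

Definition optical_index (l d : nat) : nat :=
  minP (fun k => exists R : routing l d, is_routing R /\ omegaR R = k).

Fixpoint desc_aux (l d : nat) (t h : host l d) (ix : seq 'I_l) : seq (vertex l d) :=
  match ix with
  | [::] => [::]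
  | i :: ix' =>
      if h i == t i then desc_aux t h ix'
      else
        let h' : host l d := [ffun j => if j == i then t i else h j] in
        inr (i, [ffun j : 'I_l.-1 => h (lift i j)]) :: inl h' :: desc_aux t h' ix'
  end.

Definition desc_routing (l d : nat) : routing l d :=
  fun s t => desc_aux t s (rev (enum 'I_l)).

Definition wavelength (l d : nat) (s t : host l d) : {ffun 'I_l -> nat} :=
  [ffun i => (t i + d - s i) %% d].

(* Main.v *)
Require Import Defs.
From Stdlib Require Import Classical ClassicalEpsilon.
From mathcomp Require Import all_boot.
From mathcomp Require Import zify.
Set Implicit Arguments. Unset Strict Implicit. Unset Printing Implicit Defensive.


Lemma desc_hosts l d (t : host l d) ix h g :
  inl g \in desc_aux t h ix -> forall j, j \notin ix -> g j = h j.
Proof.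
elim: ix h => [|i ix IH] h //=.
case: ifP => _.
  move=> Hg j; rewrite in_cons negb_or => /andP[_ Hj]; exact: IH.
rewrite !in_cons /= => /orP[/eqP[->] j|Hg j].
  by rewrite in_cons negb_or => /andP[/negPf Hji _]; rewrite ffunE Hji.
rewrite in_cons negb_or => /andP[/negPf Hji Hj].
by rewrite (IH _ Hg j Hj) ffunE Hji.
Qed.

Lemma desc_sw l d (t : host l d) ix h sw :
  inr sw \in desc_aux t h ix -> sw.1 \in ix.
Proof.
elim: ix h => [|i ix IH] h //=.
case: ifP => _.
  by move=> /IH; rewrite in_cons => ->; rewrite orbT.
rewrite !in_cons /= => /orP[/eqP[->]|/IH ->]; first by rewrite /= eqxx.
by rewrite orbT.
Qed.

Lemma desc_uniq l d (t : host l d) ix h :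
  uniq ix -> uniq (inl h :: desc_aux t h ix).
Proof.
elim: ix h => [|i ix IH] h //=.
move=> /andP[Hi Hu].
case: ifP => Hh; first exact: (IH h Hu).
set h' := [ffun j => if j == i then t i else h j].
have := IH h' Hu => /= /andP[Hn Hu'].
rewrite !in_cons /= Hn Hu' !andbT /=.
apply/andP; split.
  rewrite negb_or; apply/andP; split.
    apply/negP => /eqP[] /(congr1 (fun f : host l d => f i)).
    rewrite /h' ffunE eqxx => E; by move: Hh; rewrite E eqxx.
  apply/negP => /desc_hosts /(_ i Hi).
  rewrite /h' ffunE eqxx => E; by move: Hh; rewrite E eqxx.
by apply/negP => /desc_sw /=; apply/negP.
Qed.

Lemma desc_path l d (t : host l d) (ix : seq 'I_l) (h : host l d) :
  path (@Defs.arc l d) (inl h) (desc_aux t h ix).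
Proof.
elim: ix h => [|i ix IH] h //=.
case: ifP => Hh; first exact: IH.
rewrite /= IH andbT /linked /=; apply/andP; split; apply/forallP => j /=.
  by rewrite ffunE.
rewrite !ffunE; case: (lift i j =P i) => [E|_]; last by []; by have := neq_lift i j; rewrite E eqxx.
Qed.

Lemma desc_last l d (t : host l d) (ix : seq 'I_l) (h : host l d) :
  (forall j, j \notin ix -> h j = t j) -> last (inl h) (desc_aux t h ix) = inl t.
Proof.
elim: ix h => [|i ix IH] h /=.
  by move=> H; congr inl; apply/ffunP => j; apply: H.
move=> H; case: ifP => Hh.
  apply: IH => j Hj; case: (eqVneq j i) => [->|Hji]; first exact/eqP.
  by apply: H; rewrite in_cons negb_or Hji.
rewrite /=; apply: IH => j Hj; rewrite ffunE.
case: (eqVneq j i) => [->//|Hji].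
by apply: H; rewrite in_cons negb_or Hji.
Qed.

Lemma desc_is_routing l d : is_routing (@desc_routing l d).
Proof.
move=> s t _; split.
- exact: desc_path.
- by apply: desc_last => j; rewrite mem_rev mem_enum.
- by apply: desc_uniq; rewrite rev_uniq enum_uniq.
Qed.


Definition mix l d (s t : host l d) (i : 'I_l) (b : bool) : host l d :=
  [ffun j : 'I_l => if (j < i) || (b && (j == i)) then s j else t j].

Definition Good l d (s t : host l d) (a : vertex l d * vertex l d) : Prop :=
  exists i : 'I_l,
    (a.1 = inl (mix s t i true) /\ exists z, a.2 = inr (i, z)) \/
    ((exists z, a.1 = inr (i, z)) /\ a.2 = inl (mix s t i false)).

Lemma desc_good l d (s t : host l d) (ix : seq 'I_l) (h : host l d) :
  sorted (fun a b : 'I_l => b < a) ix ->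
  (forall j k : 'I_l, k \in ix -> j <= k -> j \in ix) ->
  (forall j, h j = if j \in ix then s j else t j) ->
  forall a, a \in arcs_of (inl h) (desc_aux t h ix) -> Good s t a.
Proof.
elim: ix h => [|i ix IH] h //= Hs Hc Hh.
have Hs' : sorted (fun a b : 'I_l => b < a) ix := path_sorted Hs.
have Hlt : forall j, j \in ix -> j < i.
  move=> j Hj.
  have := @order_path_min _ (fun a b : 'I_l => b < a) _ _ (fun y x z (H1 : y < x) (H2 : z < y) => ltn_trans H2 H1) Hs.
  by move=> /allP /(_ j Hj).
have Hmem : forall j, (j \in i :: ix) = (j <= i).
  move=> j; apply/idP/idP.
    by rewrite in_cons => /orP[/eqP ->//|/Hlt /ltnW].
  by move=> Hji; apply: (Hc j i) => //; rewrite in_cons eqxx.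
have Hc' : forall j k : 'I_l, k \in ix -> j <= k -> j \in ix.
  move=> j k Hk Hjk.
  have : j \in i :: ix by apply: (Hc j k) => //; rewrite in_cons Hk orbT.
  rewrite in_cons => /orP[/eqP Eji|//].
  by have := leq_ltn_trans Hjk (Hlt k Hk); rewrite Eji ltnn.
have Hni : i \notin ix by apply/negP => /Hlt; rewrite ltnn.
case: ifP => Hhi.
  apply: IH => // j.
  case: (eqVneq j i) => [->|Hji].
    by rewrite (negPf Hni); apply/eqP.
  by rewrite Hh in_cons (negPf Hji).
set h' : host l d := [ffun j => if j == i then t i else h j].
rewrite /arcs_of /= => a; rewrite !in_cons => /orP[/eqP ->|/orP[/eqP ->|Ha]].
- exists i; left; split; last by eexists.
  congr inl; apply/ffunP => j; rewrite /mix !ffunE Hh Hmem.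
  by rewrite andTb leq_eqVlt orbC.
- exists i; right; split; first by eexists.
  congr inl; apply/ffunP => j; rewrite /mix !ffunE andFb orbF.
  case: (eqVneq j i) => [->|Hji]; first by rewrite ltnn.
  rewrite Hh Hmem leq_eqVlt.
  by have -> : (nat_of_ord j == nat_of_ord i) = false by apply/negP => /eqP /val_inj /eqP; rewrite (negPf Hji).
- apply: (IH h') => // j; rewrite /h' ffunE.
  case: (eqVneq j i) => [->|Hji]; first by rewrite (negPf Hni).
  by rewrite Hh in_cons (negPf Hji).
Qed.

Lemma wv d a b : a < d -> b < d ->
  (b + d - a) %% d = if a <= b then b - a else b + d - a.
Proof.
move=> Ha Hb; case: leqP => Hab.
  have -> : b + d - a = b - a + d by lia.
  rewrite modnDr modn_small //; lia.
rewrite modn_small //; lia.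
Qed.

Lemma wv_inj d (a1 b1 a2 b2 : 'I_d) :
  (b1 + d - a1) %% d = (b2 + d - a2) %% d ->
  (a1 = a2 -> b1 = b2) /\ (b1 = b2 -> a1 = a2).
Proof.
rewrite !wv //; have := ltn_ord a1; have := ltn_ord a2; have := ltn_ord b1; have := ltn_ord b2.
move=> H1 H2 H3 H4 E; split=> [/(congr1 val) E'|/(congr1 val) E']; apply: val_inj => /=; move: E E';
  case: (leqP a1 b1); case: (leqP a2 b2); rewrite /=; lia.
Qed.

Lemma good_uniq l d (s1 t1 s2 t2 : host l d) a :
  Good s1 t1 a -> Good s2 t2 a -> wavelength s1 t1 = wavelength s2 t2 ->
  s1 = s2 /\ t1 = t2.
Proof.
case: a => a1 a2.
move=> [i [[/= E1 [z E2]]|[[z /= E1] E2]]] [i' [[/= E1' [z' E2']]|[[z' /= E1'] E2']]] Hw;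
  rewrite ?E1 ?E2 in E1' E2'; try discriminate.
- case: E2' => Ei _; subst i'; case: E1' => Em.
  have Hj : forall j, (s1 j = s2 j -> t1 j = t2 j) /\ (t1 j = t2 j -> s1 j = s2 j).
    move=> j; apply: wv_inj.
    by have := congr1 (fun f : {ffun 'I_l -> nat} => f j) Hw; rewrite /wavelength !ffunE.
  have Hm : forall j : 'I_l, if (j < i) || (true && (j == i)) then s1 j = s2 j else t1 j = t2 j.
    move=> j; have := congr1 (fun f : host l d => f j) Em; rewrite !ffunE; by case: ifP.
  split; apply/ffunP => j; have := Hm j; have := Hj j; case: ifP => _ [H1 H2] H; auto.
- case: E1' => Ei _; subst i'; case: E2' => Em.
  have Hj : forall j, (s1 j = s2 j -> t1 j = t2 j) /\ (t1 j = t2 j -> s1 j = s2 j).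
    move=> j; apply: wv_inj.
    by have := congr1 (fun f : {ffun 'I_l -> nat} => f j) Hw; rewrite /wavelength !ffunE.
  have Hm : forall j : 'I_l, if (j < i) || (false && (j == i)) then s1 j = s2 j else t1 j = t2 j.
    move=> j; have := congr1 (fun f : host l d => f j) Em; rewrite !ffunE; by case: ifP.
  split; apply/ffunP => j; have := Hm j; have := Hj j; case: ifP => _ [H1 H2] H; auto.
Qed.

Lemma desc_proper l d : proper_coloring (@desc_routing l d) (@wavelength l d).
Proof.
move=> s1 t1 s2 t2 _ _ Hne /hasP [a Ha2 Ha1].
apply/negP => /eqP Hw.
have G : forall s t, a \in arcs_of (inl s) (desc_routing s t) -> Good s t a.
  move=> s t; apply: desc_good.
  - rewrite rev_sorted; have := iota_ltn_sorted 0 l; rewrite -val_enum_ord sorted_map.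
    by apply: sub_sorted => x y.
  - by move=> j k _ _; rewrite mem_rev mem_enum.
  - by move=> j; rewrite mem_rev mem_enum.
have [E1 E2] := good_uniq (G _ _ Ha2) (G _ _ Ha1) Hw.
by move: Hne; rewrite E1 E2 eqxx.
Qed.
Definition Wf l d (dp : 0 < d) (s t : host l d) : {ffun 'I_l -> 'I_d} :=
  [ffun i => Ordinal (ltn_pmod (t i + d - s i) dp)].

Lemma ncol_wave l d (dp : 0 < d) : ncolors (@wavelength l d) <= d ^ l - 1.
Proof.
rewrite /ncolors.
pose g (f : {ffun 'I_l -> 'I_d}) : {ffun 'I_l -> nat} := [ffun i => val (f i)].
pose zero : {ffun 'I_l -> 'I_d} := [ffun _ => Ordinal dp].
have sub : {subset undup [seq wavelength p.1 p.2 | p <- host_pairs l d] <=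
            image g (predC1 zero)}.
  move=> x; rewrite mem_undup => /mapP [[s t] Hp ->] /=.
  move: Hp; rewrite mem_filter /= => /andP [Hst _].
  have -> : wavelength s t = g (Wf dp s t) by apply/ffunP => i; rewrite !ffunE.
  apply: image_f; rewrite inE; apply/negP => /eqP Hz.
  move/negP: Hst; apply; apply/eqP/ffunP => i; apply: val_inj.
  have := congr1 (fun f : {ffun 'I_l -> 'I_d} => val (f i)) Hz; rewrite !ffunE /=.
  rewrite wv //; have := ltn_ord (s i); have := ltn_ord (t i).
  case: (leqP (s i) (t i)) => /=; lia.
have := uniq_leq_size (undup_uniq _) sub.
by rewrite size_image cardC1 card_ffun !card_ord subn1.
Qed.


Lemma minP_spec (P : nat -> Prop) : (exists n, P n) ->
  P (minP P) /\ forall m, P m -> minP P <= m.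
Proof.
move=> [n Pn].
have ex : exists k, P k /\ forall m, P m -> k <= m.
  elim/ltn_ind: n Pn => n IH Pn.
  case: (classic (exists m, P m /\ m < n)) => [[m [Pm lt]]|N].
    exact: IH m lt Pm.
  exists n; split=> // m Pm; rewrite leqNgt; apply/negP => lt; apply: N.
  by exists m.
exact: (epsilon_spec (inhabits 0) _ ex).
Qed.

Definition isup l d (k : 'I_l) (a : vertex l d * vertex l d) : bool :=
  match a with (inl _, inr sw) => sw.1 == k | _ => false end.

Definition vk l d (k : 'I_l) (x : vertex l d) : option 'I_d :=
  match x with inl h => Some (h k) | inr sw => omap sw.2 (unlift sw.1 k) end.

Lemma vk_path l d (k : 'I_l) (t : host l d) (p : seq (vertex l d)) (x : vertex l d) :
  path (@Defs.arc l d) x p -> last x p = inl t ->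
  ~~ has (isup k) (zip (x :: p) p) -> vk k x != None -> vk k x = Some (t k).
Proof.
elim: p x => [|y p IH] x /=; first by move=> _ ->.
move=> /andP [Hxy Hp] Hl; rewrite negb_or => /andP [Hu Hn] Hv.
suff [E Hy] : vk k x = vk k y /\ vk k y != None by rewrite E; exact: IH.
clear IH Hp Hl Hn; case: x y Hxy Hu Hv => [h|[k1 z]] [h'|[k2 z']] //= Hxy Hu Hv.
  case: unliftP => [j Ej|Ej]; last by move: Hu; rewrite Ej eqxx.
  by move/forallP: Hxy => /(_ j) /= /eqP ->; rewrite Ej.
move: Hv; case: unliftP => [j Ej|Ej] // _.
by move/forallP: Hxy => /(_ j) /= /eqP ->; rewrite Ej.
Qed.

Lemma path_zip (T : eqType) (r : rel T) x p a :
  path r x p -> a \in zip (x :: p) p -> r a.1 a.2.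
Proof.
elim: p x => [|y p IH] x //= /andP [Hxy Hp]; rewrite in_cons => /orP [/eqP -> //|].
exact: IH.
Qed.

Lemma lower l d (hl : 0 < l) (hd : 1 < d) (R : routing l d)
  (c : host l d -> host l d -> nat) :
  is_routing R -> proper_coloring R c -> d ^ l - d ^ (l - 1) <= ncolors c.
Proof.
move=> HR Hc.
pose k : 'I_l := Ordinal hl.
pose pr (h : host l d) : {ffun 'I_l.-1 -> 'I_d} := [ffun j => h (lift k j)].
pose U (p : host l d * host l d) (h : host l d) :=
  (inl h, inr (k, pr h)) \in arcs_of (inl p.1) (R p.1 p.2).
pose f p := odflt p.1 [pick h | U p h].
have C1 : forall p : host l d * host l d, p.1 k != p.2 k -> U p (f p).
  move=> [s t] /= Hk.
  have Hne : s != t by apply/negP => /eqP E; move: Hk; rewrite E eqxx.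
  have [Hpath Hlast _] := HR _ _ Hne.
  have : has (isup k) (zip (inl s :: R s t) (R s t)).
    apply/negPn/negP => Hn.
    have := vk_path Hpath Hlast Hn; rewrite /= => /(_ isT) [E].
    by move: Hk; rewrite E eqxx.
  move=> /hasP [[[h|sw] [h'|[k' z]]] Ha //= /eqP Ek].
  have Hl := path_zip Hpath Ha; move: Hl Ha; rewrite /= Ek => Hl Ha.
  have Ez : z = pr h by apply/ffunP => j; move/forallP: Hl => /(_ j) /eqP ->; rewrite ffunE.
  have Uh : U (s, t) h by rewrite /U /arcs_of /= -Ez.
  rewrite /f; case: pickP => [h'' //|N].
  by move: (N h); rewrite Uh.
have C2 : forall h, \sum_(p : host l d * host l d | (p.1 k != p.2 k) && (f p == h)) 1 <= ncolors c.
  move=> h; set F := [set p : host l d * host l d | (p.1 k != p.2 k) && (f p == h)].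
  have -> : \sum_(p : host l d * host l d | (p.1 k != p.2 k) && (f p == h)) 1 = #|F|.
    by rewrite -sum1_card; apply: eq_bigl => p; rewrite !inE.
  have HF : forall p, p \in F -> p.1 != p.2 /\ U p h.
    move=> p; rewrite inE => /andP [Hk /eqP Hf]; split.
      by apply/negP => /eqP E; move: Hk; rewrite E eqxx.
    by rewrite -Hf; apply: C1.
  have Hsub : {subset [seq c p.1 p.2 | p <- enum F] <=
               undup [seq c p.1 p.2 | p <- host_pairs l d]}.
    move=> x /mapP [p Hp ->]; rewrite mem_undup; apply: map_f.
    rewrite mem_enum in Hp; have [Hne _] := HF p Hp.
    rewrite mem_filter Hne /=; case: p {Hp Hne} => s t.
    by apply: (allpairs_f pair); rewrite mem_enum.
  have Hu : uniq [seq c p.1 p.2 | p <- enum F].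
    rewrite map_inj_in_uniq ?enum_uniq // => p q Hp Hq E.
    rewrite !mem_enum in Hp Hq.
    case: (eqVneq p q) => // Hpq; exfalso.
    have [Hp1 Hp2] := HF p Hp; have [Hq1 Hq2] := HF q Hq.
    move: Hpq Hp1 Hp2 Hq1 Hq2 E; case: p {Hp} => s1 t1; case: q {Hq} => s2 t2 /= Hpq Hp1 Hp2 Hq1 Hq2 E.
    have Hs : share_arc R s1 t1 s2 t2 by apply/hasP; exists (inl h, inr (k, pr h)).
    by move: (Hc s1 t1 s2 t2 Hp1 Hq1 Hpq Hs); rewrite E eqxx.
  by have := uniq_leq_size Hu Hsub; rewrite size_map -cardE.
have T1 : \sum_(p : host l d * host l d | p.1 k != p.2 k) 1 <= #|host l d| * ncolors c.
  rewrite (partition_big f xpredT) //.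
  apply: (@leq_trans (\sum_(j : host l d) ncolors c)).
    by apply: leq_sum => h _; exact: C2 h.
  by rewrite sum_nat_const.
have Hcard : forall v : 'I_d, #|[pred t : host l d | t k == v]| <= d ^ (l - 1).
  move=> v; have := @leq_card_in _ _ pr [pred t : host l d | t k == v].
  rewrite card_ffun !card_ord subn1; apply=> t1 t2; rewrite !inE => /eqP H1 /eqP H2 E.
  apply/ffunP => j; case: (unliftP k j) => [j' ->|->].
    by have := congr1 (fun g : {ffun 'I_l.-1 -> 'I_d} => g j') E; rewrite !ffunE.
  by rewrite H1 H2.
have T2 : #|host l d| * (d ^ l - d ^ (l - 1)) <= \sum_(p : host l d * host l d | p.1 k != p.2 k) 1.
  have -> : \sum_(p : host l d * host l d | p.1 k != p.2 k) 1 = \sum_(s : host l d | xpredT s) \sum_(t : host l d | s k != t k) 1.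
    by rewrite pair_big_dep; apply: eq_bigl.
  rewrite -sum_nat_const; apply: leq_sum => s _.
  have -> : \sum_(t : host l d | s k != t k) 1 = #|[predC [pred t : host l d | t k == s k]]|.
    by rewrite -sum1_card; apply: eq_bigl => t; rewrite !inE eq_sym.
  have := cardC [pred t : host l d | t k == s k]; have := Hcard (s k).
  rewrite card_ffun !card_ord => H1 <-; rewrite leq_subLR leq_add2r; exact: H1.
have := leq_trans T2 T1; rewrite leq_pmul2l // card_ffun !card_ord expn_gt0.
by rewrite (leq_trans _ hd).
Qed.

Theorem mainTheorem5 (l d : nat) (hl : 1 <= l) (hd : 2 <= d) :
  [/\ is_routing (@desc_routing l d),
      proper_coloring (@desc_routing l d) (@wavelength l d),
      ncolors (@wavelength l d) <= d ^ l - 1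
    & d ^ l - d ^ (l - 1) <= optical_index l d <= d ^ l - 1].
Proof.
have Hd : 0 < d by apply: ltnW.
pose cw (s t : host l d) := pickle (wavelength s t).
have Pcw : proper_coloring (@desc_routing l d) cw.
  move=> s1 t1 s2 t2 H1 H2 H3 H4; apply/negP => /eqP /(pcan_inj pickleK) E.
  by move: (desc_proper H1 H2 H3 H4); rewrite E eqxx.
have Ncw : ncolors cw <= d ^ l - 1.
  rewrite /ncolors.
  have -> : [seq cw p.1 p.2 | p <- host_pairs l d] =
            map pickle [seq wavelength p.1 p.2 | p <- host_pairs l d].
    by rewrite -map_comp.
  rewrite undup_map_inj ?size_map; last exact: (pcan_inj pickleK).
  exact: ncol_wave.
have Hom : omegaR (@desc_routing l d) <= d ^ l - 1.
  have [_ H] := minP_spec (ex_intro (fun k => exists c : host l d -> host l d -> nat,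
                   proper_coloring (@desc_routing l d) c /\ ncolors c = k) _
                   (ex_intro _ cw (conj Pcw erefl))).
  exact: leq_trans (H _ (ex_intro _ cw (conj Pcw erefl))) Ncw.
have Hex : exists n, exists R : routing l d, is_routing R /\ omegaR R = n.
  by exists (omegaR (@desc_routing l d)), (@desc_routing l d); split => //; apply: desc_is_routing.
have [[R [HR HRo]] Hmin] := minP_spec Hex.
split.
- exact: desc_is_routing.
- exact: desc_proper.
- exact: ncol_wave.
apply/andP; split.
  rewrite /optical_index -HRo.
  pose cp (s t : host l d) := pickle (s, t).
  have Pcp : proper_coloring R cp.
    move=> s1 t1 s2 t2 H1 H2 H3 H4; apply/negP => /eqP /(pcan_inj pickleK) E.
    by move: H3; rewrite E eqxx.
  have [[c [Hc Hcn]] _] := minP_spec (ex_intro (fun k => exists c : host l d -> host l d -> nat,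
                   proper_coloring R c /\ ncolors c = k) _
                   (ex_intro _ cp (conj Pcp erefl))).
  rewrite /omegaR -Hcn; exact: (lower hl hd HR Hc).
apply: leq_trans Hom; apply: Hmin.
exists (@desc_routing l d); split => //; exact: desc_is_routing.
Qed.
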